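(* Let $p\in(1,\infty)$ and $n_1,n_2\in\mathbb N$ with $n_1\le n_2$. If $\mathbb H^{n_2}\in\mathbb T^{n_2}_p(\tau,m)$ with $\tau>0$, then $$\mathbb H^{n_1}(\mathbb H^{n_2}):=\Big\{\frac{\boldsymbol z}{\|\boldsymbol z\|_p}:\boldsymbol z\in\mathbb R^{n_1},\ \boldsymbol z\ne\boldsymbol0,\ \boldsymbol z\vee\boldsymbol y\in\mathbb H^{n_2}\text{ for some }\boldsymbol y\in\mathbb R^{n_2-n_1}\Big\}\in\mathbb T^{n_1}_p(\tau,m).$$
   Context: $1/p+1/q=1$; $\mathbb S^N_p$ unit $\ell_p$-sphere in $\mathbb R^N$; $\mathbb T^N_p(\tau,m)$ the family of $\mathbb H\subseteq\mathbb S^N_p$ with $|\mathbb H|\le m$ such that every $\boldsymbol x\in\mathbb S^N_q$ has $\boldsymbol v\in\mathbb H$ with $\boldsymbol x^{\mathrm T}\boldsymbol v\ge\tau$. $\boldsymbol z\vee\boldsymbol y$ is the concatenation of vectors. *)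

(* Defs.v *)
From HB Require Import structures.
From mathcomp Require Import all_boot all_order all_algebra.
From mathcomp Require Import all_classical all_reals.
From mathcomp Require Import exp.
Unset Printing Implicit Defensive.
Import Order.TTheory GRing.Theory Num.Theory.
Local Open Scope ring_scope.
Local Open Scope classical_set_scope.

Definition normp (R : realType) (p : R) (N : nat) (x : 'rV[R]_N) : R :=
  (\sum_(i < N) `|x 0 i| `^ p) `^ p^-1.

Definition dotv (R : realType) (N : nat) (x v : 'rV[R]_N) : R :=
  \sum_(i < N) x 0 i * v 0 i.

(* conjugate exponent q with 1/p + 1/q = 1 *)
Definition conj_exp (R : realType) (p : R) : R := p / (p - 1).

Definition sphere (R : realType) (p : R) (N : nat) : set 'rV[R]_N :=
  [set x | @normp R p N x = 1].

Definition Tfam (R : realType) (p : R) (N : nat) (tau : R) (m : nat)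
  (H : set 'rV[R]_N) : Prop :=
  [/\ H `<=` @sphere R p N,
      (exists s : seq 'rV[R]_N, (size s <= m)%N /\ H `<=` [set` s])
    & forall x, @sphere R (@conj_exp R p) N x -> exists2 v, H v & tau <= @dotv R N x v].

Definition vcat (R : realType) (n1 n2 : nat) (h : (n1 <= n2)%N)
  (z : 'rV[R]_n1) (y : 'rV[R]_(n2 - n1)) : 'rV[R]_n2 :=
  castmx (erefl 1%N, subnKC h) (row_mx z y).

Definition restrH (R : realType) (p : R) (n1 n2 : nat) (h : (n1 <= n2)%N)
  (H : set 'rV[R]_n2) : set 'rV[R]_n1 :=
  [set w | exists z : 'rV[R]_n1, [/\ z != 0,
      (exists y : 'rV[R]_(n2 - n1), H (@vcat R n1 n2 h z y))
    & w = (@normp R p n1 z)^-1 *: z]].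

(* Main.v *)
Require Import Defs.
From HB Require Import structures.
From mathcomp Require Import all_boot all_order all_algebra.
From mathcomp Require Import all_classical all_reals.
From mathcomp Require Import exp.
Import Order.TTheory GRing.Theory Num.Theory.
Local Open Scope ring_scope.
Local Open Scope classical_set_scope.

Arguments normp {R} p {N} x.
Arguments dotv {R} {N} x v.
Arguments sphere {R} p {N} _.
Arguments vcat {R} {n1 n2} h z y.

Section Aux.
Variable R : realType.

Lemma sum_cat2 (n1 k n : nat) (e : (n1 + k)%N = n) (z1 z2 : 'rV[R]_n1)
  (y1 y2 : 'rV[R]_k) (F : R -> R -> R) :
  \sum_(i < n) F ((castmx (erefl 1%N, e) (row_mx z1 y1)) 0 i)
                 ((castmx (erefl 1%N, e) (row_mx z2 y2)) 0 i) =
  \sum_(i < n1) F (z1 0 i) (z2 0 i) + \sum_(i < k) F (y1 0 i) (y2 0 i).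
Proof.
case: n / e; rewrite !castmx_id big_split_ord /=.
by congr (_ + _); apply: eq_bigr => i _; rewrite ?row_mxEl ?row_mxEr.
Qed.

Lemma sum_cat1 (n1 k n : nat) (e : (n1 + k)%N = n) (z : 'rV[R]_n1)
  (y : 'rV[R]_k) (F : R -> R) :
  \sum_(i < n) F ((castmx (erefl 1%N, e) (row_mx z y)) 0 i) =
  \sum_(i < n1) F (z 0 i) + \sum_(i < k) F (y 0 i).
Proof.
exact: (@sum_cat2 n1 k n e z z y y (fun a _ => F a)).
Qed.

Lemma vcat_split n1 n2 (h : (n1 <= n2)%N) (v : 'rV[R]_n2) :
  exists z y, v = vcat h z y.
Proof.
set v' := castmx (erefl 1%N, esym (subnKC h)) v.
exists (lsubmx v'), (rsubmx v').
by rewrite /vcat hsubmxK /v' castmxKV.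
Qed.

Lemma sumS_ge0 n (p : R) (z : 'rV[R]_n) : 0 <= \sum_(i < n) `|z 0 i| `^ p.
Proof. by apply: sumr_ge0 => i _; apply: powR_ge0. Qed.

Lemma normp_gt0 n (p : R) (z : 'rV[R]_n) : p != 0 -> z != 0 -> 0 < normp p z.
Proof.
move=> p0 z0; rewrite /normp; apply: powR_gt0.
have [i zi] : exists i, z 0 i != 0.
  apply/existsP; apply: contraNT z0 => /existsPn H.
  by apply/eqP/rowP => i; rewrite mxE; apply/eqP; move: (H i); rewrite negbK.
rewrite (bigD1 i) //=; apply: (@lt_le_trans _ _ (`|z 0 i| `^ p)).
- by apply: powR_gt0; rewrite normr_gt0.
- by rewrite lerDl; apply: sumr_ge0 => j _; apply: powR_ge0.
Qed.

Lemma normpZ n (p : R) (c : R) (z : 'rV[R]_n) : 0 < p -> 0 <= c ->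
  normp p (c *: z) = c * normp p z.
Proof.
move=> p0 c0; rewrite /normp.
under eq_bigr => i _ do rewrite mxE normrM (ger0_norm c0) powRM //.
rewrite -mulr_sumr powRM ?powR_ge0 ?sumS_ge0 //.
by rewrite -powRrM mulfV ?gt_eqF // powRr1.
Qed.

End Aux.

Theorem lemma4p7 (R : realType) (p : R) (n1 n2 : nat) (h : (n1 <= n2)%N)
  (tau : R) (m : nat) (H : set 'rV[R]_n2) :
  1 < p -> 0 < tau -> @Tfam R p n2 tau m H -> @Tfam R p n1 tau m (@restrH R p n1 n2 h H).
Proof.
move=> p1 tau0 [Hs [s [ss Hsub]] Hcov].
have p0 : 0 < p by apply: lt_trans p1.
have pn0 : p != 0 by rewrite gt_eqF.
split.
- move=> w [z [z0 _ ->]]; rewrite /sphere /= normpZ //.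
    by rewrite mulVf // gt_eqF // normp_gt0.
  by rewrite invr_ge0 ltW // normp_gt0.
- pose f (v : 'rV[R]_n2) :=
    let z := lsubmx (castmx (erefl 1%N, esym (subnKC h)) v) in (normp p z)^-1 *: z.
  exists (map f s); split; first by rewrite size_map.
  move=> w [z [z0 [y Hy] ->]] /=.
  have -> : (normp p z)^-1 *: z = f (vcat h z y).
    by rewrite /f /vcat castmx_comp castmx_id row_mxKl.
  by apply: map_f; apply: Hsub.
- move=> x Hx.
  have q0 : 0 < conj_exp R p.
    by rewrite /conj_exp divr_gt0 // subr_gt0.
  have Hx' : sphere (conj_exp R p) (vcat h x 0).
    rewrite /sphere /= /normp /vcat (@sum_cat1 _ _ _ _ _ x 0 (fun a => `|a| `^ conj_exp R p)).
    rewrite [X in _ + X]big1 ?addr0; first exact: Hx.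
    by move=> i _; rewrite mxE normr0 powR0 // gt_eqF.
  have [v Hv Hdot] := Hcov _ Hx'.
  have [z [y ev]] := @vcat_split _ _ _ h v.
  have dz : dotv (vcat h x 0) v = dotv x z.
    rewrite ev /dotv /vcat ((@sum_cat2 _ _ _ _ _ _ _ _ _ (fun a b => a * b))).
    by rewrite [X in _ + X]big1 ?addr0 // => i _; rewrite mxE mul0r.
  rewrite dz in Hdot.
  have z0 : z != 0.
    apply: contraTneq Hdot => ->; rewrite -ltNge /dotv.
    by rewrite big1 // => i _; rewrite mxE mulr0.
  have N0 := @normp_gt0 _ _ _ z pn0 z0.
  have N1 : normp p z <= 1.
    have := Hs _ Hv; rewrite /sphere /= ev /normp /vcat (@sum_cat1 _ _ _ _ _ z y (fun a => `|a| `^ p)) => <-.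
    apply: ge0_ler_powR; first by rewrite invr_ge0 ltW.
    - by rewrite nnegrE sumS_ge0.
    - by rewrite nnegrE addr_ge0 ?sumS_ge0.
    - by rewrite lerDl sumS_ge0.
  exists ((normp p z)^-1 *: z).
    by exists z; split => //; exists y; rewrite -ev.
  have -> : dotv x ((normp p z)^-1 *: z) = dotv x z * (normp p z)^-1.
    rewrite /dotv mulr_suml; apply: eq_bigr => i _.
    by rewrite mxE mulrCA mulrC.
  apply: (le_trans Hdot); apply: ler_peMr.
    have Hd0 : 0 <= dotv x z by apply: le_trans Hdot; apply: ltW.
    exact: Hd0.
  have U : normp p z \is a GRing.unit by rewrite unitfE gt_eqF.
  by rewrite (invr_ge1 U N0).
Qed.
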